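(* Let $E$ be a realizable matrix of rank $k$, and let $A$ be a $(0,1)$ matrix such that $A$ and $A+E$ are Gram mates. Then there exist $k$ positive singular values of $A$ such that the set of their corresponding right (resp. left) singular vectors is a basis of $\mathrm{Row}(E)$ (resp. $\mathrm{Col}(E)$); that is, there is a singular value decomposition $A=U\Sigma V^T$ and $k$ indices $i$ with $\Sigma_{ii}>0$ such that the corresponding $k$ columns of $V$ form a basis of $\mathrm{Row}(E)$ and the corresponding $k$ columns of $U$ form a basis of $\mathrm{Col}(E)$.
   Context: Two $(0,1)$ matrices $A,B$ are Gram mates if $AA^T=BB^T$, $A^TA=B^TB$ and $A\neq B$. A $(0,1,-1)$ matrix $E$ with $E\mathbf 1=0$ and $\mathbf 1^TE=0^T$ is realizable if there is a $(0,1)$ matrix $A$ such that $A$ and $A+E$ are Gram mates. *)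

(* Defs.v *)
From HB Require Import structures.
From mathcomp Require Import all_boot all_order all_algebra.
From mathcomp Require Import reals.
Set Implicit Arguments. Unset Strict Implicit. Unset Printing Implicit Defensive.
Import Order.TTheory GRing.Theory Num.Theory.
Local Open Scope ring_scope.

Definition zero_one (R : realType) (m n : nat) (A : 'M[R]_(m, n)) : Prop :=
  forall i j, A i j = 0 \/ A i j = 1.

Definition zero_one_neg (R : realType) (m n : nat) (E : 'M[R]_(m, n)) : Prop :=
  forall i j, [\/ E i j = 0, E i j = 1 | E i j = -1].

Definition gram_mates (R : realType) (m n : nat) (A B : 'M[R]_(m, n)) : Prop :=
  [/\ zero_one A, zero_one B, A *m A^T = B *m B^T, A^T *m A = B^T *m B & A <> B].

Definition realizable (R : realType) (m n : nat) (E : 'M[R]_(m, n)) : Prop :=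
  [/\ zero_one_neg E,
      E *m (const_mx 1 : 'cV[R]_n) = 0,
      (const_mx 1 : 'rV[R]_m) *m E = 0
    & exists A : 'M[R]_(m, n), zero_one A /\ gram_mates A (A + E)].

Definition orthogonal_mx (R : realType) (n : nat) (U : 'M[R]_n) : Prop :=
  U *m U^T = 1%:M /\ U^T *m U = 1%:M.

Definition nonneg_diag (R : realType) (m n : nat) (S : 'M[R]_(m, n)) : Prop :=
  (forall (i : 'I_m) (j : 'I_n), val i != val j -> S i j = 0) /\
  (forall (i : 'I_m) (j : 'I_n), val i = val j -> 0 <= S i j).

Definition is_svd (R : realType) (m n : nat) (A : 'M[R]_(m, n))
  (U : 'M[R]_m) (S : 'M[R]_(m, n)) (V : 'M[R]_n) : Prop :=
  [/\ orthogonal_mx U, orthogonal_mx V, nonneg_diag S & A = U *m S *m V^T].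

(* Main.v *)
Require Import Defs.
From HB Require Import structures.
From mathcomp Require Import all_boot all_order all_algebra.
From mathcomp Require Import reals.
From mathcomp Require Import ring lra.
From mathcomp.real_closed Require Import complex.
Import Order.TTheory GRing.Theory Num.Theory.
Local Open Scope ring_scope.

Set Implicit Arguments. Unset Strict Implicit. Unset Printing Implicit Defensive.



Lemma sym_eigen_exists (R : rcfType) n (M : 'M[R]_n.+1) : M^T = M ->
  exists (v : 'rV[R]_n.+1) (l : R), v != 0 /\ v *m M = l *: v.
Proof.
move=> Msym.
pose f := real_complex R.
pose MC := map_mx f M.
have MCsym : MC \is symmetricmx.
  apply/is_hermitianmxP; rewrite expr0 scale1r map_mx_id //.
  by rewrite /MC map_trmx Msym.
have MCreal : MC \is a realmx.
  by apply/mxOverP => i j; rewrite mxE /f complex_real.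
have MCh := realsym_hermsym MCsym MCreal.
have /orthomx_spectralP MCE := hermitian_normalmx MCh.
have dreal := hermitian_spectral_diag_real MCh.
set P := spectralmx MC in MCE.
set d := spectral_diag MC in MCE dreal.
have Punit : P \in unitmx by apply: spectral_unit.
have PM : P *m MC = diag_mx d *m P.
  by rewrite {1}MCE !mulmxA mulmxV // mul1mx.
have d0r : d 0 0 \is Num.real by apply: (mxOverP dreal).
pose r := complex.Re (d 0 0).
have rE : f r = d 0 0.
  rewrite /r; move: d0r; case: (d 0 0) => a b.
  by rewrite complex_real => /eqP ->.
have rowP0 : row 0 P != 0.
  apply/negP => /eqP H; have := congr1 (mulmx^~ (invmx P)) H.
  rewrite /= -row_mul mulmxV // mul0mx => /rowP/(_ 0).
  by rewrite !mxE eqxx /= => /eqP; rewrite oner_eq0.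
have ev : row 0 P *m (MC - (f r)%:M) = 0.
  rewrite mulmxBr -row_mul PM row_mul row_diag_mx -scalemxAl -rowE.
  by rewrite rE mul_mx_scalar subrr.
have detC : \det (MC - (f r)%:M) == 0 by apply/det0P; exists (row 0 P).
have detR : \det (M - r%:M) == 0.
  move: detC; have -> : MC - (f r)%:M = map_mx f (M - r%:M).
    by rewrite map_mxB /= map_scalar_mx.
  by rewrite det_map_mx fmorph_eq0.
have [v vn0 vM] := det0P detR.
exists v, r; split => //.
by move/eqP: vM; rewrite mulmxBr subr_eq0 mul_mx_scalar => /eqP.
Qed.

Section Base.
Variable R : realType.

Definition dot n (u w : 'rV[R]_n) := (u *m w^T) 0 0.

Lemma dotE n (u w : 'rV[R]_n) : u *m w^T = (dot u w)%:M.
Proof. exact: mx11_scalar. Qed.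

Lemma dotC n (u w : 'rV[R]_n) : dot u w = dot w u.
Proof. by rewrite /dot -[u *m w^T]trmxK trmx_mul trmxK mxE. Qed.

Lemma dot_sum n (u : 'rV[R]_n) : dot u u = \sum_i u 0 i ^+ 2.
Proof. by rewrite /dot mxE; apply: eq_bigr => i _; rewrite mxE expr2. Qed.

Lemma dot_ge0 n (u : 'rV[R]_n) : 0 <= dot u u.
Proof. by rewrite dot_sum sumr_ge0 // => i _; rewrite sqr_ge0. Qed.

Lemma dot_eq0 n (u : 'rV[R]_n) : (dot u u == 0) = (u == 0).
Proof.
apply/idP/idP => [|/eqP->]; last by rewrite /dot mul0mx mxE.
rewrite dot_sum psumr_eq0 => [/allP H|i _]; last by rewrite sqr_ge0.
apply/eqP/rowP => i; rewrite mxE; apply/eqP.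
by rewrite -sqrf_eq0; apply: (implyP (H i (mem_index_enum _))).
Qed.

Lemma dotZl n a (u w : 'rV[R]_n) : dot (a *: u) w = a * dot u w.
Proof. by rewrite /dot -scalemxAl [in LHS]mxE. Qed.

Lemma dotZr n a (u w : 'rV[R]_n) : dot u (a *: w) = a * dot u w.
Proof. by rewrite dotC dotZl dotC. Qed.

Lemma dotDl n (u v w : 'rV[R]_n) : dot (u + v) w = dot u w + dot v w.
Proof. by rewrite /dot mulmxDl mxE. Qed.

Lemma dotDr n (u v w : 'rV[R]_n) : dot w (u + v) = dot w u + dot w v.
Proof. by rewrite dotC dotDl !(dotC w). Qed.

Lemma dotNl n (u w : 'rV[R]_n) : dot (- u) w = - dot u w.
Proof. by rewrite /dot mulNmx mxE. Qed.

Lemma dotNr n (u w : 'rV[R]_n) : dot w (- u) = - dot w u.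
Proof. by rewrite dotC dotNl dotC. Qed.

Lemma normalize n (u : 'rV[R]_n) : u != 0 ->
  exists2 c : R, c != 0 & dot (c *: u) (c *: u) = 1.
Proof.
move=> un0; have pos : 0 < dot u u by rewrite lt_def dot_eq0 un0 dot_ge0.
exists (Num.sqrt (dot u u))^-1.
  by rewrite invr_eq0 gt_eqF // sqrtr_gt0.
rewrite dotZl dotZr.
rewrite mulrA -expr2 exprVn sqr_sqrtr ?ltW // mulVf // gt_eqF //.
Qed.

Lemma householder n (v : 'rV[R]_n) (i0 : 'I_n) : dot v v = 1 ->
  exists H : 'M[R]_n, orthogonal_mx H /\ row i0 H = v.
Proof.
move=> v1; pose e : 'rV[R]_n := delta_mx 0 i0.
have e1 : dot e e = 1.
  by rewrite /dot trmx_delta mul_delta_mx mxE !eqxx.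
have [ve|nve] := eqVneq v e.
  by exists 1%:M; rewrite /orthogonal_mx trmx1 mulmx1 ve rowE mulmx1.
pose w := v - e; have wE : w = v - e by [].
clearbody w; pose c := dot w w.
have cn0 : c != 0 by rewrite /c dot_eq0 wE subr_eq0.
pose H := 1%:M - (2 / c) *: (w^T *m w).
have HT : H^T = H by rewrite /H linearB /= linearZ /= trmx1 trmx_mul trmxK.
have WW : w^T *m w *m (w^T *m w) = c *: (w^T *m w).
  by rewrite mulmxA -[w^T *m w *m w^T]mulmxA dotE mul_mx_scalar -scalemxAl.
have HH : H *m H = 1%:M.
  rewrite /H mulmxBl mul1mx mulmxBr mulmx1 -scalemxAl -scalemxAr WW.
  have -> : (2 / c) *: ((2 / c) *: (c *: (w^T *m w))) =
            (2 / c) *: (w^T *m w) + (2 / c) *: (w^T *m w).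
    by rewrite [(2 / c) *: (c *: _)]scalerA divfK // -scalerDr -mulr2n -scaler_nat.
  by rewrite opprB addrK subrK.
exists H; split; first by rewrite /orthogonal_mx HT HH.
rewrite rowE /H mulmxBr mulmx1 -scalemxAr mulmxA dotE mul_scalar_mx scalerA.
pose a := dot e v.
have ew : dot e w = a - 1 by rewrite wE dotDr dotNr e1.
have cE : c = 2 - 2 * a.
  rewrite /c wE dotDl !dotDr !dotNl !dotNr v1 e1 opprK (dotC v e) -/a.
  ring.
have k : 2 / c * dot e w = -1.
  rewrite ew; apply: (mulIf cn0); rewrite mulrAC divfK // cE mulN1r.
  by rewrite mulrBr mulr1 opprB.
by rewrite k scaleN1r opprK wE addrC subrK.
Qed.

Lemma orth1 n : orthogonal_mx (1%:M : 'M[R]_n).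
Proof. by rewrite /orthogonal_mx trmx1 mulmx1. Qed.

Lemma orth_tr n (A : 'M[R]_n) : orthogonal_mx A -> orthogonal_mx A^T.
Proof. by rewrite /orthogonal_mx trmxK => -[]. Qed.

Lemma orth_mul n (A B : 'M[R]_n) :
  orthogonal_mx A -> orthogonal_mx B -> orthogonal_mx (A *m B).
Proof.
move=> [A1 A2] [B1 B2]; split; rewrite trmx_mul.
  by rewrite mulmxA -[A *m B *m B^T]mulmxA B1 mulmx1 A1.
by rewrite mulmxA -[B^T *m A^T *m A]mulmxA A2 mulmx1 B2.
Qed.

Lemma orth_block m n (A : 'M[R]_m) (B : 'M[R]_n) :
  orthogonal_mx A -> orthogonal_mx B -> orthogonal_mx (block_mx A 0 0 B).
Proof.
move=> [A1 A2] [B1 B2]; split; rewrite tr_block_mx !trmx0 mulmx_block;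
  rewrite ?A1 ?A2 ?B1 ?B2 !mulmx0 !mul0mx !addr0 !add0r -scalar_mx_block //.
Qed.

Lemma unit_eigen m n (A : 'M[R]_(m, n)) : (0 < n)%N ->
  exists (v : 'rV[R]_n) (l : R), dot v v = 1 /\ v *m A^T *m A = l *: v.
Proof.
case: n A => // n A _.
have [|v [l [vn0 vM]]] := @sym_eigen_exists R n (A^T *m A).
  by rewrite trmx_mul trmxK.
have [c cn0 cv] := normalize vn0.
exists (c *: v), l; split => //.
by rewrite -mulmxA -scalemxAl vM scalerA mulrC -scalerA.
Qed.
End Base.


Section Svd.
Variable R : realType.

Definition svd_sorted m n (A : 'M[R]_(m,n)) U S V (r : nat) :=
  [/\ is_svd A U S V, (r <= m)%N, (r <= n)%N &
      forall (i : 'I_m) (j : 'I_n), val i = val j -> (val i < r)%N = (0 < S i j)].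

Lemma step_zero m N n' (eN : N = (n' + 1)%N) (A : 'M[R]_(m, N)) (v : 'rV[R]_N) :
  dot v v = 1 -> v *m A^T = 0 ->
  (forall A' : 'M[R]_(m, n'), exists U S V r, @svd_sorted m n' A' U S V r) ->
  exists U S V r, svd_sorted A U S V r.
Proof.
subst N => v1 vA IH.
have [H [[HH1 HH2] Hv]] := householder (rshift n' (0 : 'I_1)) v1.
pose C := A *m H^T.
have dH : dsubmx H = v.
  by rewrite -Hv; apply/rowP => j; rewrite !mxE.
have Cr : rsubmx C = 0.
  rewrite -mulmx_rsub -trmx_dsub dH -(trmxK A) -trmx_mul vA.
  by rewrite trmx0.
have [U' [S' [V' [r' [[oU oV [Sd Sp] AE] hr1 hr2 srt]]]]] := IH (lsubmx C).
exists U', (row_mx S' 0), (H^T *m block_mx V' 0 0 1%:M), r'.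
split; last 3 first.
- exact: hr1.
- by rewrite (leq_trans hr2) // leq_addr.
- move=> i j; case: (split_ordP j) => j' -> /=.
    by rewrite row_mxEl => /srt.
  rewrite row_mxEr mxE ltxx => ->; rewrite /= ord1 addn0.
  by apply/negbTE; rewrite -leqNgt.
split => //.
- by apply: orth_mul; [exact: orth_tr | apply: orth_block => //; exact: orth1].
- split=> i j; case: (split_ordP j) => j' -> /=.
  + by rewrite row_mxEl; apply: Sd.
  + by rewrite row_mxEr mxE.
  + by rewrite row_mxEl; apply: Sp.
  + by rewrite row_mxEr mxE.
rewrite trmx_mul trmxK tr_block_mx !trmx0 trmx1 mulmxA.
rewrite -[U' *m _ *m _]mulmxA mul_row_block !mulmx0 !mul0mx !addr0.
rewrite mul_mx_row mulmx0 mulmxA -AE -Cr hsubmxK /C -mulmxA.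
by rewrite HH2 mulmx1.
Qed.


Lemma row0_orth n (H : 'M[R]_n.+1) : orthogonal_mx H ->
  row 0 H *m H^T = delta_mx 0 0.
Proof. by rewrite /orthogonal_mx => -[H1 _]; rewrite -row_mul H1 row1. Qed.

Lemma step_pos m' n' (A : 'M[R]_(1 + m', 1 + n')) (v : 'rV[R]_(1 + n')) l :
  dot v v = 1 -> v *m A^T *m A = l *: v -> 0 < l ->
  (forall A' : 'M[R]_(m', n'), exists U S V r, @svd_sorted m' n' A' U S V r) ->
  exists U S V r, svd_sorted A U S V r.
Proof.
move=> v1 vAA l0 IH.
pose s := Num.sqrt l.
have s0 : 0 < s by rewrite sqrtr_gt0.
have ss : s * s = l by rewrite -expr2 sqr_sqrtr // ltW.
pose u := s^-1 *: (v *m A^T).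
have lE : dot (v *m A^T) (v *m A^T) = l.
  rewrite /dot trmx_mul trmxK mulmxA vAA -scalemxAl mxE -/(dot v v) v1.
  by rewrite mulr1.
have u1 : dot u u = 1.
  rewrite /u dotZl dotZr lE -ss; field; by rewrite gt_eqF.
have uA : u *m A = s *: v.
  rewrite /u -scalemxAl vAA scalerA -ss; congr (_ *: _); field; by rewrite gt_eqF.
have Av : v *m A^T = s *: u.
  by rewrite /u scalerA mulfV ?gt_eqF // scale1r.
have [Hv [oHv Hv0]] := householder (0 : 'I_(1 + n')) v1.
have [Hu [oHu Hu0]] := householder (0 : 'I_(1 + m')) u1.
pose C := Hu *m A *m Hv^T.
have r0 : row 0 C = s *: delta_mx 0 0.
  by rewrite /C !row_mul Hu0 uA -scalemxAl -Hv0 row0_orth.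
have c0 : row 0 C^T = s *: delta_mx 0 0.
  by rewrite /C !trmx_mul trmxK !row_mul Hv0 mulmxA Av -scalemxAl -Hu0 row0_orth.
have hrow : forall j, C 0 j = s * (j == 0)%:R.
  move=> j; have := congr1 (fun M : 'rV[R]_(1 + n') => M 0 j) r0.
  by rewrite !mxE eqxx /= eq_sym.
have hcol : forall i, C i 0 = s * (i == 0)%:R.
  move=> i; have := congr1 (fun M : 'rV[R]_(1 + m') => M 0 i) c0.
  by rewrite !mxE eqxx /= eq_sym.
have l0m : lshift m' (ord0 : 'I_1) = 0 by apply/val_inj.
have l0n : lshift n' (ord0 : 'I_1) = 0 by apply/val_inj.
have CE : C = block_mx s%:M 0 0 (drsubmx C).
  apply/matrixP => i j.
  case: (split_ordP i) => i' ->; case: (split_ordP j) => j' ->.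
  - by rewrite block_mxEul !ord1 l0m l0n hrow mxE !eqxx mulr1 mulr1n.
  - by rewrite block_mxEur ord1 l0m hrow -l0n eq_sym eq_lrshift mulr0 mxE.
  - by rewrite block_mxEdl ord1 l0n hcol -l0m eq_sym eq_lrshift mulr0 mxE.
  - by rewrite [RHS]block_mxEdr drsubmxEsub [RHS]mxE.
have [U' [S' [V' [r' [[oU oV [Sd Sp] AE] hr1 hr2 srt]]]]] := IH (drsubmx C).
exists (Hu^T *m block_mx 1%:M 0 0 U'), (block_mx s%:M 0 0 S'),
  (Hv^T *m block_mx 1%:M 0 0 V'), r'.+1.
split; last 3 first.
- by [].
- by [].
- move=> i j.
  case: (split_ordP i) => i' ->; case: (split_ordP j) => j' -> /=.
  + by rewrite block_mxEul !ord1 mxE eqxx mulr1n s0.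
  + by rewrite ord1 /= => /eqP.
  + by rewrite ord1 /= => /eqP.
  + by rewrite block_mxEdr => -[] /srt.
split.
- by apply: orth_mul; [exact: orth_tr | apply: orth_block => //; exact: orth1].
- by apply: orth_mul; [exact: orth_tr | apply: orth_block => //; exact: orth1].
- split=> i j;
  case: (split_ordP i) => i' ->; case: (split_ordP j) => j' -> /=.
  + by rewrite !ord1.
  + by rewrite block_mxEur mxE.
  + by rewrite block_mxEdl mxE.
  + by rewrite block_mxEdr => H; apply: Sd; apply: contra H => /eqP ->.
  + by rewrite block_mxEul !ord1 mxE eqxx mulr1n ltW.
  + by rewrite block_mxEur mxE.
  + by rewrite block_mxEdl mxE.
  + by rewrite block_mxEdr => -[] /Sp.
rewrite trmx_mul trmxK tr_block_mx !trmx0 trmx1.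
rewrite !mulmxA -[Hu^T *m _ *m _]mulmxA mulmx_block.
rewrite !mulmx0 !mul0mx !addr0 !add0r mul1mx.
rewrite -[Hu^T *m _ *m block_mx _ _ _ _]mulmxA mulmx_block.
rewrite !mulmx0 !mul0mx !addr0 !add0r mulmx1 -AE -CE /C.
case: oHu => _ H1; case: oHv => _ H2.
by rewrite !mulmxA H1 mul1mx -mulmxA H2 mulmx1.
Qed.

Lemma svd_exists n : forall m (A : 'M[R]_(m, n)),
  exists U S V r, svd_sorted A U S V r.
Proof.
elim: n => [|n IHn] m A.
  exists 1%:M, 0, 1%:M, 0%N; split => //.
  - split; try exact: orth1.
      by split => i j; rewrite mxE.
    by rewrite mulmx0 mul0mx; exact: thinmx0.
  - by move=> i [].
have [v [l [v1 vAA]]] := unit_eigen A (ltn0Sn n).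
have lE : dot (v *m A^T) (v *m A^T) = l.
  rewrite /dot trmx_mul trmxK mulmxA vAA -scalemxAl mxE -/(dot v v) v1.
  by rewrite mulr1.
have [l0|ln0] := eqVneq l 0.
  have vA : v *m A^T = 0 by apply/eqP; rewrite -dot_eq0 lE l0.
  by apply: (@step_zero m n.+1 n _ A v v1 vA (IHn m)); rewrite addn1.
have lpos : 0 < l by rewrite lt_def ln0 -lE dot_ge0.
case: m A vAA lE => [|m'] A vAA lE.
  by move: ln0; rewrite -lE [v *m A^T]thinmx0 /dot mul0mx mxE eqxx.
exact: (@step_pos m' n A v l v1 vAA lpos (IHn m')).
Qed.
End Svd.


Section Comp.
Variable R : realType.

Lemma orth_rowsub_free n r (X : 'M[R]_n) (f : 'I_r -> 'I_n) :
  orthogonal_mx X -> injective f -> row_free (rowsub f X).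
Proof.
move=> [X1 _] finj.
have P1 : rowsub f X *m (rowsub f X)^T = 1%:M.
  rewrite mul_rowsub_mx trmx_mxsub mulmx_colsub X1.
  by apply/matrixP => s t; rewrite !mxE (inj_eq finj).
rewrite /row_free eqn_leq rank_leq_row /=.
by rewrite -{1}(mxrank1 R r) -P1 mxrankM_maxl.
Qed.

Lemma completion m k n' (E : 'M[R]_(m, k + n')) : \rank E = k ->
  exists X : 'M[R]_(k + n'), orthogonal_mx X /\ (usubmx X == E)%MS.
Proof.
move=> rE.
have [U [S [V [r [[oU oV [Sd Sp] AE] hr1 hr2 srt]]]]] := svd_exists E.
pose w := widen_ord hr2; pose wm := widen_ord hr1.
pose Vr := rowsub w V^T.
have Sz : forall i (l : 'I_(k + n')), (r <= l)%N -> S i l = 0.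
  move=> i l rl; have [il|il] := eqVneq (val i) (val l); last exact: Sd.
  have := srt i l il; rewrite il ltnNge rl /= => /esym/negbT.
  by rewrite -leNgt => H; apply/eqP; rewrite eq_le H Sp.
have F : S *m V^T = colsub w S *m Vr.
  apply/matrixP => i j; rewrite !mxE.
  rewrite (bigID (fun l : 'I_(k + n') => (l < r)%N)) /=.
  rewrite [X in _ + X]big1 ?addr0; last first.
    by move=> l; rewrite -leqNgt => /Sz ->; rewrite mul0r.
  rewrite (@big_ord_narrow _ _ _ r (k + n') _ hr2) /=.
  by apply: eq_bigr => t _; rewrite !mxE.
have E1 : E = (U *m colsub w S) *m Vr by rewrite AE -mulmxA F mulmxA.
have sub1 : (E <= Vr)%MS by rewrite {1}E1 submxMl.
have UE : U^T *m E = colsub w S *m Vr.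
  by case: oU => _ UU; rewrite AE !mulmxA UU mul1mx -F.
pose D := rowsub wm (colsub w S).
have DVr : rowsub wm (U^T *m E) = D *m Vr by rewrite UE -mul_rowsub_mx.
have Dpos : forall t, 0 < D t t.
  by move=> t; rewrite !mxE -srt //= ltn_ord.
have Dunit : D \in unitmx.
  have DE : D = diag_mx (\row_t D t t).
    apply/matrixP => s t; rewrite [RHS]mxE [(\row__ _) _ _]mxE.
    have [<-|st] := eqVneq s t; first by rewrite mulr1n.
    by rewrite mulr0n !mxE; apply: Sd.
  rewrite DE unitmxE det_diag unitfE; apply/prodf_neq0 => t _.
  by rewrite mxE gt_eqF.
have sub2 : (Vr <= E)%MS.
  by rewrite -(mulKmx Dunit Vr) -DVr -mul_rowsub_mx mulmxA submxMl.
have winj : injective w.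
  by move=> s t /(congr1 val) /= /val_inj.
have rVr : \rank Vr = r by apply/eqP; apply: orth_rowsub_free (orth_tr oV) winj.
have eqVE : (Vr == E)%MS by rewrite sub1 sub2.
have rk : r = k by rewrite -rE -rVr (eqmx_rank eqVE).
exists V^T; split; first exact: orth_tr.
subst r.
suff -> : usubmx V^T = Vr by [].
rewrite usubmxEsub; apply: eq_rowsub => t; exact: val_inj.
Qed.
End Comp.


Section Main.
Variable R : realType.

Lemma orth_split k n' (X : 'M[R]_(k + n')) : orthogonal_mx X ->
  [/\ usubmx X *m (usubmx X)^T = 1%:M, usubmx X *m (dsubmx X)^T = 0,
      dsubmx X *m (usubmx X)^T = 0 & dsubmx X *m (dsubmx X)^T = 1%:M].
Proof.
move=> [X1 _]; move: X1; rewrite -(vsubmxK X) tr_col_mx mul_col_row col_mxKu col_mxKd.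
by rewrite (scalar_mx_block k n') => /eq_block_mx.
Qed.

Lemma unit_eqmx m n (P : 'M[R]_m) (B : 'M[R]_(m, n)) : P \in unitmx ->
  (P *m B :=: B)%MS.
Proof. by move=> Pu; apply/eqmxP/eqmxMunitP; exists P. Qed.

Lemma orth_unit n (U : 'M[R]_n) : orthogonal_mx U -> U \in unitmx.
Proof.
move=> [U1 _]; have := congr1 determinant U1; rewrite det_mulmx det_tr det1.
rewrite unitmxE unitfE => h; apply/eqP => d0; move: h; rewrite d0 mul0r.
by move/eqP; rewrite eq_sym oner_eq0.
Qed.

Lemma sub_prod k m' n' (Y : 'M[R]_(k + m')) (A : 'M[R]_(k + m', k + n'))
  (X : 'M[R]_(k + n')) :
  [/\ ulsubmx (Y *m A *m X^T) = usubmx Y *m A *m (usubmx X)^T,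
      ursubmx (Y *m A *m X^T) = usubmx Y *m A *m (dsubmx X)^T,
      dlsubmx (Y *m A *m X^T) = dsubmx Y *m A *m (usubmx X)^T &
      drsubmx (Y *m A *m X^T) = dsubmx Y *m A *m (dsubmx X)^T].
Proof.
by rewrite /ulsubmx /ursubmx /dlsubmx /drsubmx -!mul_usub_mx -!mul_dsub_mx
  -!mulmx_lsub -!mulmx_rsub -trmx_usub -trmx_dsub.
Qed.

Lemma main_blocks k m' n' (E A : 'M[R]_(k + m', k + n')) :
  \rank E = k ->
  A *m A^T = (A + E) *m (A + E)^T -> A^T *m A = (A + E)^T *m (A + E) ->
  exists (U : 'M[R]_(k + m')) (S : 'M[R]_(k + m', k + n')) (V : 'M[R]_(k + n')),
    is_svd A U S V /\
    [/\ (forall t, 0 < S (lshift m' t) (lshift n' t)),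
        row_free (usubmx V^T) /\ (usubmx V^T == E)%MS
      & row_free (usubmx U^T) /\ (usubmx U^T == E^T)%MS].
Proof.
move=> rE G1 G2.
have I1 : A *m E^T = - (E *m (A + E)^T).
  apply/eqP; rewrite -addr_eq0; apply/eqP.
  apply: (@addrI _ (A *m A^T)); rewrite addr0 [RHS]G1 linearD /= !mulmxDl !mulmxDr.
  by rewrite !addrA.
have I2 : E^T *m A = - ((A + E)^T *m E).
  apply/eqP; rewrite -addr_eq0; apply/eqP.
  apply: (@addrI _ (A^T *m A)); rewrite addr0 [RHS]G2 linearD /= !mulmxDl !mulmxDr.
  by rewrite !addrA; congr (_ + _); exact: addrAC.
have rET : \rank E^T = k by rewrite mxrank_tr.
have [X [oX /andP [sXE sEX]]] := completion rE.
have [Y [oY /andP [sYE sEY]]] := completion rET.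
have [M2 XuE] := submxP sXE; have [M1 EXu] := submxP sEX.
have [N2 YuE] := submxP sYE; have [N1 EYu] := submxP sEY.
have [Xuu Xud Xdu Xdd] := orth_split oX.
have [Yuu Yud Ydu Ydd] := orth_split oY.
pose B := Y *m A *m X^T.
have [Bul Bur Bdl Bdr] := sub_prod Y A X.
have Bur0 : ursubmx B = 0.
  rewrite /B Bur YuE -mulmxA mulmxA -[N2 *m E^T *m A]mulmxA I2 mulmxN mulNmx -!mulmxA EXu.
  by rewrite -mulmxA Xud !mulmx0 oppr0.
have Bdl0 : dlsubmx B = 0.
  rewrite /B Bdl XuE trmx_mul -mulmxA mulmxA [dsubmx Y *m _ *m _]mulmxA.
  rewrite -[dsubmx Y *m A *m E^T]mulmxA I1 mulmxN mulNmx mulmxA.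
  rewrite -(trmxK E) EYu trmx_mul mulmxA Ydu mul0mx !mul0mx oppr0.
  by [].
have B1u : ulsubmx B \in unitmx.
  rewrite unitmxE unitfE; apply/negP => /det0P [z zn0].
  rewrite /B Bul !mulmxA => zB.
  pose c := z *m N2; pose y := z *m usubmx Y.
  have yE : y = c *m E^T by rewrite /y YuE mulmxA.
  pose W := - (c *m (A + E)^T).
  have yA : y *m A = W *m E.
    by rewrite yE -mulmxA I2 mulmxN /W mulNmx mulmxA.
  have WM : W *m M1 = 0.
    have := zB; rewrite -/y yA EXu -!mulmxA Xuu mulmx1 => ->.
    by [].
  have yA0 : y *m A = 0 by rewrite yA EXu mulmxA WM mul0mx.
  have yB0 : y *m (A + E) = 0.
    apply/eqP; rewrite -dot_eq0 /dot trmx_mul mulmxA -[y *m _ *m _]mulmxA -G1.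
    by rewrite mulmxA yA0 !mul0mx mxE.
  have yE0 : y *m E = 0.
    by move: yB0; rewrite mulmxDr yA0 add0r.
  have y0 : y = 0.
    apply/eqP; rewrite -dot_eq0 /dot {2}yE trmx_mul trmxK mulmxA yE0 mul0mx.
    by rewrite mxE.
  move: zn0; rewrite -[z]mulmx1 -Yuu mulmxA -/y y0 mul0mx.
  by rewrite eqxx.
have BE : B = block_mx (ulsubmx B) 0 0 (drsubmx B).
  by rewrite -Bur0 -Bdl0 submxK.
have [U1 [S1 [V1 [r1 [[oU1 oV1 [Sd1 Sp1] AE1] _ _ _]]]]] := svd_exists (ulsubmx B).
have [U2 [S2 [V2 [r2 [[oU2 oV2 [Sd2 Sp2] AE2] _ _ _]]]]] := svd_exists (drsubmx B).
have S1u : S1 \in unitmx.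
  have -> : S1 = U1^T *m ulsubmx B *m V1.
    case: oU1 => _ H1; case: oV1 => _ H2.
    by rewrite AE1 !mulmxA H1 mul1mx -mulmxA H2 mulmx1.
  by rewrite !unitmx_mul unitmx_tr B1u (orth_unit oU1) (orth_unit oV1).
have S1pos : forall t, 0 < S1 t t.
  move=> t; rewrite lt_def Sp1 // andbT; apply/negP => /eqP St.
  move: S1u; rewrite unitmxE unitfE => /negP; apply; apply/det0P.
  exists (delta_mx 0 t).
    by apply/eqP => /matrixP/(_ 0 t); rewrite !mxE !eqxx /= => /eqP; rewrite oner_eq0.
  rewrite -rowE; apply/rowP => j; rewrite !mxE.
  have [<-|tj] := eqVneq t j; first by rewrite St.
  by apply: Sd1; apply: contra tj => /eqP /val_inj ->.
exists (Y^T *m block_mx U1 0 0 U2), (block_mx S1 0 0 S2), (X^T *m block_mx V1 0 0 V2).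
split.
  split.
  - by apply: orth_mul; [exact: orth_tr | exact: orth_block].
  - by apply: orth_mul; [exact: orth_tr | exact: orth_block].
  - split=> i j;
    case: (split_ordP i) => i' ->; case: (split_ordP j) => j' -> /=.
    + by rewrite block_mxEul; apply: Sd1.
    + by rewrite block_mxEur mxE.
    + by rewrite block_mxEdl mxE.
    + rewrite block_mxEdr => H; apply: Sd2; apply: contra H => /eqP /= ->.
      by [].
    + by rewrite block_mxEul; apply: Sp1.
    + by rewrite block_mxEur mxE.
    + by rewrite block_mxEdl mxE.
    + by rewrite block_mxEdr => /addnI /Sp2.
  rewrite trmx_mul trmxK tr_block_mx !trmx0.
  rewrite !mulmxA -[Y^T *m _ *m _]mulmxA mulmx_block.
  rewrite !mulmx0 !mul0mx !addr0 !add0r.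
  rewrite -[Y^T *m _ *m block_mx _ _ _ _]mulmxA mulmx_block.
  rewrite !mulmx0 !mul0mx !addr0 !add0r -AE1 -AE2 -BE /B.
  case: oY => _ H1; case: oX => _ H2.
  by rewrite !mulmxA H1 mul1mx -mulmxA H2 mulmx1.
split.
- by move=> t; rewrite block_mxEul.
- have VuE : usubmx (X^T *m block_mx V1 0 0 V2)^T = V1^T *m usubmx X.
    rewrite trmx_mul trmxK tr_block_mx !trmx0 -mul_usub_mx block_mxEv col_mxKu.
    by rewrite -[X in _ *m X](vsubmxK X) mul_row_col mul0mx addr0.
  have Xuf : row_free (usubmx X).
    by rewrite usubmxEsub; apply: orth_rowsub_free oX (@lshift_inj _ _).
  have XuEq : (usubmx X :=: E)%MS by apply/eqmxP; rewrite sXE sEX.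
  have V1u : V1^T \in unitmx by rewrite unitmx_tr orth_unit.
  rewrite VuE; split.
    by rewrite /row_free mxrankMfree // mxrank_unit.
  by apply/eqmxP; apply: eqmx_trans (unit_eqmx _ V1u) XuEq.
- have UuE : usubmx (Y^T *m block_mx U1 0 0 U2)^T = U1^T *m usubmx Y.
    rewrite trmx_mul trmxK tr_block_mx !trmx0 -mul_usub_mx block_mxEv col_mxKu.
    by rewrite -[Y in _ *m Y](vsubmxK Y) mul_row_col mul0mx addr0.
  have Yuf : row_free (usubmx Y).
    by rewrite usubmxEsub; apply: orth_rowsub_free oY (@lshift_inj _ _).
  have YuE' : (usubmx Y :=: E^T)%MS by apply/eqmxP; rewrite sYE sEY.
  have U1u : U1^T \in unitmx by rewrite unitmx_tr orth_unit.
  rewrite UuE; split.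
    by rewrite /row_free mxrankMfree // mxrank_unit.
  by apply/eqmxP; apply: eqmx_trans (unit_eqmx _ U1u) YuE'.
Qed.
End Main.

Unset Implicit Arguments.

Theorem lemma3p4 (R : realType) (m n k : nat) (E A : 'M[R]_(m, n)) :
  realizable E -> \rank E = k ->
  zero_one A -> gram_mates A (A + E) ->
  exists (U : 'M[R]_m) (S : 'M[R]_(m, n)) (V : 'M[R]_n)
         (fu : 'I_k -> 'I_m) (fv : 'I_k -> 'I_n),
    is_svd A U S V /\
    [/\ injective fu,
        (forall t, val (fu t) = val (fv t)),
        (forall t, 0 < S (fu t) (fv t)),
        row_free (rowsub fv V^T) /\ (rowsub fv V^T == E)%MS
      & row_free (rowsub fu U^T) /\ (rowsub fu U^T == E^T)%MS].
Proof.
move=> _ rE _ [_ _ G1 G2 _].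
have km : (k <= m)%N by rewrite -rE rank_leq_row.
have kn : (k <= n)%N by rewrite -rE rank_leq_col.
move: E A rE G1 G2.
rewrite -(subnKC km) -(subnKC kn).
move: (m - k)%N (n - k)%N => m' n' E A rE G1 G2.
have [U [S [V [svd [Spos [Vf VE] [Uf UE]]]]]] := main_blocks rE G1 G2.
exists U, S, V, (lshift m'), (lshift n'); split => //.
split.
- exact: lshift_inj.
- by [].
- exact: Spos.
- by rewrite -usubmxEsub.
- by rewrite -usubmxEsub.
Qed.
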